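(* Let $\sigma=(a_1,\ldots,a_s)$ be a partition of the positive integer $r\ge 2$ with $a_1\ge a_2\ge\cdots\ge a_s\ge 1$, let $n\ge s$ and $q\ge a_1$, and let $H=H(n,r,q\mid\sigma)$. Then the independence number of $H$ is \[\alpha(H)=\max\{(j-1)q+(a_j-1)(n-j+1)\;:\; j=1,\ldots,s\}.\]
   Context: A $\sigma$-hypergraph $H=H(n,r,q\mid\sigma)$, for a partition $\sigma=(a_1,\ldots,a_s)$ of $r$ with $s$ parts, is the $r$-uniform hypergraph whose vertex set is the disjoint union of $n$ classes $V_1,\ldots,V_n$, each of size $q$; an $r$-subset $K$ of vertices is an edge iff the multiset of non-zero values $|K\cap V_i|$ ($1\le i\le n$) equals $\sigma$. A vertex set is independent if it contains no edge; $\alpha(H)$ is the maximum size of an independent set. *)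

(* Defs.v *)
From mathcomp Require Import all_boot.
Set Implicit Arguments. Unset Strict Implicit. Unset Printing Implicit Defensive.

(* Vertex set of H(n,r,q|sigma): pairs (i, k) = k-th vertex of class V_i. *)
Definition vert (n q : nat) : finType := prod 'I_n 'I_q.

Definition vclass (n q : nat) (i : 'I_n) : {set vert n q} :=
  [set x : vert n q | x.1 == i].

Definition profile (n q : nat) (K : {set vert n q}) : seq nat :=
  [seq c <- [seq #|K :&: vclass q i| | i <- enum 'I_n] | 0 < c].

Definition sigma_edge (n r q : nat) (sigma : seq nat) (K : {set vert n q}) : bool :=
  (#|K| == r) && perm_eq (profile K) sigma.

Definition sigma_independent (n r q : nat) (sigma : seq nat) (S : {set vert n q}) : bool :=
  [forall K : {set vert n q}, (K \subset S) ==> ~~ sigma_edge r sigma K].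

Definition sigma_alpha (n r q : nat) (sigma : seq nat) : nat :=
  \max_(S : {set vert n q} | sigma_independent r sigma S) #|S|.

(* Main.v *)
Require Import Defs.
From mathcomp Require Import all_boot.

Lemma card_classes n q (S : {set vert n q}) :
  #|S| = \sum_(i < n) #|S :&: vclass q i|.
Proof.
rewrite -sum1_card (partition_big (fun x : vert n q => x.1) xpredT) //=.
apply: eq_bigr => i _; rewrite -sum1_card; apply: eq_bigl => x.
by rewrite !inE.
Qed.

Lemma class_sum n q (S : {set vert n q}) i :
  #|S :&: vclass q i| = \sum_(k < q) ((i, k) \in S).
Proof.
rewrite -sum1_card (partition_big (fun x : vert n q => x.2) xpredT) //=.
apply: eq_bigr => k _.
case ikS: ((i, k) \in S).
  rewrite (big_pred1 (i, k)) //= => x; rewrite !inE.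
  case: x => [i' k'] /=.
  apply/andP/eqP => [[/andP[H /eqP ->] /eqP ->] | [-> ->]] //.
  by rewrite ikS eqxx.
rewrite big_pred0 // => x; rewrite !inE.
case: x => [i' k'] /=.
apply/negbTE; apply/andP => [[/andP[H /eqP E] /eqP E']].
by move: H; rewrite E E' ikS.
Qed.

Lemma card_ltn m k : k <= m -> \sum_(i < m) (i < k) = k.
Proof.
move=> km; rewrite -(big_mkord xpredT (fun i => nat_of_bool (i < k))).
rewrite (@big_cat_nat _ _ _ k) //=.
rewrite (@eq_big_nat _ _ _ 0 k _ (fun _ => 1)); last by move=> i /andP[_ ->].
rewrite (@eq_big_nat _ _ _ k m _ (fun _ => 0)); last first.
  by move=> i /andP[H _]; rewrite ltnNge H.
by rewrite sum_nat_const_nat big1_eq subn0 muln1 addn0.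
Qed.

Lemma card_take_index (T : finType) (A : {set T}) e :
  e <= #|A| -> #|[set x in A | index x (enum A) < e]| = e.
Proof.
move=> eA.
have -> : [set x in A | index x (enum A) < e] = [set x in take e (enum A)].
  apply/setP => x; rewrite !inE.
  case xA: (x \in A) => /=.
    by rewrite in_take // mem_enum.
  apply/esym/negbTE; apply: contraFN xA => /mem_take; by rewrite mem_enum.
rewrite cardsE (card_uniqP _) ?take_uniq ?enum_uniq // size_take -cardE.
by case: ltngtP eA => //.
Qed.

Lemma sumn_filter_pos s : sumn [seq c <- s | 0 < c] = sumn s.
Proof. by elim: s => //= [[|x]] s IH //=; rewrite IH. Qed.

Lemma edge_of_list n q (sigma : seq nat) (S : {set vert n q}) (l : seq 'I_n) :
  all (fun a => 0 < a) sigma -> uniq l -> size l = size sigma ->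
  (forall i, i \in l -> nth 0 sigma (index i l) <= #|S :&: vclass q i|) ->
  exists K : {set vert n q}, (K \subset S) && sigma_edge (sumn sigma) sigma K.
Proof.
move=> pos ul sl Hl.
pose f i := nth 0 sigma (index i l).
have fle : forall i, f i <= #|S :&: vclass q i|.
  move=> i; case il: (i \in l); first exact: Hl.
  by rewrite /f memNindex ?il // nth_default // sl.
pose K := [set x : vert n q | (x \in S) && (index x (enum (S :&: vclass q x.1)) < f x.1)].
have dK : forall i, #|K :&: vclass q i| = f i.
  move=> i; rewrite -(@card_take_index _ _ _ (fle i)); apply: eq_card => x.
  rewrite !inE; case E: (x.1 == i); last by rewrite !andbF.
  by rewrite (eqP E) !andbT.
have pK : perm_eq (profile K) sigma.
  rewrite /profile (eq_map dK) filter_map.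
  have -> : [seq i <- enum 'I_n | preim f (fun c => 0 < c) i] = [seq i <- enum 'I_n | i \in l].
    apply: eq_filter => i /=; rewrite /f; case il: (i \in l).
      by apply: (all_nthP 0 pos); rewrite -sl index_mem.
    by rewrite memNindex ?il // nth_default // sl.
  have -> : sigma = map f l.
    apply: (@eq_from_nth _ 0); first by rewrite size_map.
    move=> t; rewrite -sl => tl.
    have x0 : 'I_n by destruct l as [|x ?]; [done | exact x].
    by rewrite (nth_map x0) // /f index_uniq.
  apply: perm_map; apply: uniq_perm; first by rewrite filter_uniq // enum_uniq.
    by [].
  by move=> i; rewrite mem_filter mem_enum andbT.
exists K; apply/andP; split.
  by apply/subsetP => x; rewrite inE => /andP[].
rewrite /sigma_edge pK andbT; apply/eqP.
rewrite -(perm_sumn pK) /profile sumn_filter_pos card_classes sumnE big_map big_enum.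
by [].
Qed.

Lemma build n (c : 'I_n -> nat) (sigma : seq nat) :
  (forall j, j < size sigma -> j < #|[set i | nth 0 sigma j <= c i]|) ->
  forall m, m <= size sigma -> exists l : seq 'I_n,
    [/\ uniq l, size l = m & forall i, i \in l -> nth 0 sigma (index i l) <= c i].
Proof.
move=> H; elim=> [|m IH] ms.
  by exists [::].
have [l [ul sl Hl]] := IH (ltnW ms).
have : ~~ ([set i | nth 0 sigma m <= c i] \subset l).
  apply/negP => sub; have := subset_leq_card sub.
  have := card_size l; have := H m ms; rewrite sl => h1 h2 h3.
  have := leq_ltn_trans (leq_trans h3 h2) h1; by rewrite ltnn.
case/subsetPn => i iA il.
exists (rcons l i); split.
- by rewrite rcons_uniq il.
- by rewrite size_rcons sl.
- move=> x; rewrite -cats1 index_cat mem_cat inE.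
  case xl: (x \in l) => /=; first by move=> _; exact: Hl.
  move/eqP=> ->; rewrite eqxx addn0 sl; move: iA; by rewrite inE.
Qed.

From mathcomp Require Import zify.

Lemma c_le_q n q (S : {set vert n q}) i : #|S :&: vclass q i| <= q.
Proof.
rewrite class_sum; apply: leq_trans (_ : \sum_(k < q) 1 <= q).
  by apply: leq_sum => k _; apply: leq_b1.
by rewrite sum_nat_const card_ord muln1.
Qed.

Lemma nth_le0 (sigma : seq nat) j : sorted geq sigma -> j < size sigma ->
  nth 0 sigma j <= nth 0 sigma 0.
Proof.
move=> so js.
have tr : transitive geq by move=> a b c h1 h2; apply: leq_trans h2 h1.
have := sorted_leq_nth tr (fun x => leqnn x) 0 so; move=> /(_ 0 j).
rewrite !inE; apply => //; by apply: leq_ltn_trans js.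
Qed.

Lemma arith x y j b q n s1 s2 : s1 <= x*q -> s2 <= y*b -> x + y = n -> x <= j -> b <= q -> j <= n -> s1 + s2 <= j*q + b*(n-j).
Proof.
move=> h1 h2 h3 h4 h5 h6.
have [d Ed] : exists d, j = x + d. exists (j - x). lia.
have [e Ee] : exists e, y = d + e. exists (y - d). lia.
subst y j. have -> : n - (x + d) = e. lia.
have h7 : d * b <= d * q by apply: leq_mul.
apply: leq_trans (leq_add h1 h2) _.
rewrite mulnDl mulnDl -addnA leq_add2l [b * e]mulnC leq_add2r //.
Qed.

Lemma upper n q r sigma (S : {set vert n q}) :
  sumn sigma = r -> all (fun a => 0 < a) sigma -> sorted geq sigma ->
  size sigma <= n -> nth 0 sigma 0 <= q -> sigma_independent r sigma S ->
  #|S| <= \max_(j < size sigma) (j * q + (nth 0 sigma j - 1) * (n - j)).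
Proof.
move=> sr pos so sn a0q ind.
pose c i := #|S :&: vclass q i|.
have [j Hj] : exists j : 'I_(size sigma), #|[set i | nth 0 sigma j <= c i]| <= j.
  case: (boolP [exists j : 'I_(size sigma), #|[set i | nth 0 sigma j <= c i]| <= j]).
    by move/existsP.
  move/existsPn => Hn; exfalso.
  have H : forall j, j < size sigma -> j < #|[set i | nth 0 sigma j <= c i]|.
    by move=> j js; have := Hn (Ordinal js); rewrite /= ltnNge.
  have [l [ul sl Hl]] := @build _ _ _ H _ (leqnn _).
  have [K /andP[KS eK]] := edge_of_list _ _ _ _ _ pos ul sl Hl.
  move/forallP: ind => /(_ K); by rewrite KS /= -sr eK.
apply: leq_trans (leq_bigmax j).
set A := [set i | nth 0 sigma j <= c i] in Hj.
set b := nth 0 sigma j - 1.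
have bq : b <= q.
  have := nth_le0 _ _ so (ltn_ord j); rewrite /b; lia.
rewrite card_classes (bigID (fun i => i \in A)) /=.
have h1 : \sum_(i < n | i \in A) c i <= #|A| * q.
  rewrite -sum_nat_const; apply: leq_sum => i _; exact: c_le_q.
have h2 : \sum_(i < n | i \notin A) c i <= #|~: A| * b.
  rewrite -sum_nat_const (eq_bigl (fun i => i \notin A)); last by move=> i; rewrite inE.
  apply: leq_sum => i; rewrite inE -ltnNge /b => h; lia.
have h3 := cardsC A; rewrite card_ord in h3.
have jn : j <= n by apply: leq_trans sn; apply: ltnW.
rewrite /c in h1 h2.
exact: (arith _ _ _ _ _ _ _ _ h1 h2 h3 Hj bq jn).
Qed.

Lemma nth_le (sigma : seq nat) t j : sorted geq sigma -> t <= j -> j < size sigma ->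
  nth 0 sigma j <= nth 0 sigma t.
Proof.
move=> so tj js.
have tr : transitive geq by move=> a b c h1 h2; apply: leq_trans h2 h1.
have := sorted_leq_nth tr (fun x => leqnn x) 0 so; move=> /(_ t j).
rewrite !inE; apply => //; by apply: leq_ltn_trans js.
Qed.

Lemma count_ord_lt n j : j <= n -> count (fun i : 'I_n => i < j) (enum 'I_n) = j.
Proof.
move=> jn; rewrite -sum1_count big_enum_cond /= big_mkcond /=.
rewrite -[RHS](card_ltn _ _ jn); apply: eq_bigr => i _; by case: (i < j).
Qed.

Lemma lower n q r sigma (j : 'I_(size sigma)) :
  all (fun a => 0 < a) sigma -> sorted geq sigma ->
  size sigma <= n -> nth 0 sigma 0 <= q ->
  j * q + (nth 0 sigma j - 1) * (n - j) <= sigma_alpha n r q sigma.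
Proof.
move=> pos so sn a0q.
set a := nth 0 sigma j; set b := a - 1.
have apos : 0 < a by apply: (all_nthP 0 pos).
have bq : b <= q by have := nth_le0 _ _ so (ltn_ord j); rewrite /b /a; lia.
have jn : j <= n by apply: leq_trans sn; apply: ltnW.
pose S := [set x : vert n q | (x.1 < j) || (x.2 < b)].
have cS : forall i, #|S :&: vclass q i| = if i < j then q else b.
  move=> i; rewrite class_sum; case: ifP => ij.
    rewrite (eq_bigr (fun _ => 1)); last by move=> k _; rewrite inE /= ij.
    by rewrite sum_nat_const card_ord muln1.
  rewrite -[RHS](card_ltn _ _ bq); apply: eq_bigr => k _; by rewrite inE /= ij.
have cardS : #|S| = j * q + b * (n - j).
  rewrite card_classes (eq_bigr _ (fun i _ => cS i)).
  rewrite -(big_mkord xpredT (fun i => if i < j then q else b)).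
  rewrite (@big_cat_nat _ _ _ j) //=.
  rewrite (@eq_big_nat _ _ _ 0 j _ (fun _ => q)); last by move=> i /andP[_ ->].
  rewrite (@eq_big_nat _ _ _ j n _ (fun _ => b)); last first.
    by move=> i /andP[H _]; rewrite ltnNge H.
  by rewrite !sum_nat_const_nat subn0 [b * _]mulnC.
rewrite -cardS.
apply: (leq_bigmax_cond (F := fun S : {set vert n q} => #|S|)).
apply/forallP => K; apply/implyP => KS; apply/negP => /andP[_ pK].
pose p := fun x => a <= x.
have h1 : j.+1 <= count p sigma.
  rewrite -[X in count p X](cat_take_drop j.+1 sigma) count_cat.
  apply: leq_trans (leq_addr _ _).
  have : all p (take j.+1 sigma).
    apply/(all_nthP 0) => t; rewrite size_take => ht.
    have jl := ltn_ord j.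
    have tj : t <= j by move: ht; case: ifP => [_|/negbT H]; lia.
    rewrite nth_take // /p /a; apply: nth_le => //.
  rewrite all_count => /eqP ->; rewrite size_take; case: ifP => // _; exact: ltn_ord.
have h2 : count p (profile K) <= j.
  rewrite /profile count_filter.
  apply: leq_trans (sub_count (a2 := p) _ _) _; first by move=> x /andP[].
  rewrite count_map -[X in _ <= X](count_ord_lt _ _ jn); apply: sub_count => i /=.
  rewrite /p; case: ltnP => // ij h.
  have := leq_trans h (subset_leq_card (setSI _ KS)).
  rewrite cS ltnNge ij /= /b => h'.
  by move: apos h'; case: (a) => // a' _; rewrite subSS subn0 ltnn.
move/permP: pK => /(_ p) E.
by move: (leq_trans h1 (leq_trans (eq_leq (esym E)) h2)); rewrite ltnn.
Qed.

Theorem corollary2p9 (r n q : nat) (sigma : seq nat) :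
  2 <= r ->
  sumn sigma = r ->
  all (fun a => 0 < a) sigma ->
  sorted geq sigma ->
  size sigma <= n ->
  nth 0 sigma 0 <= q ->
  sigma_alpha n r q sigma =
    \max_(j < size sigma) (j * q + (nth 0 sigma j - 1) * (n - j)).
Proof.
move=> r2 sr pos so sn a0q.
apply/eqP; rewrite eqn_leq; apply/andP; split.
  apply/bigmax_leqP => S indS; exact: (upper _ _ _ _ _ sr pos so sn a0q indS).
apply/bigmax_leqP => j _; exact: (lower _ _ _ _ j pos so sn a0q).
Qed.
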